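(* Let $I\subset\mathbb R$ be a bounded closed non-degenerate interval, $\xi=\frac12(\min I+\max I)$, and $f:I\to\mathbb R$ measurable. If for some $a,b,c\in\mathbb R$ one has $|f(x)-(ax+b)|\le c|x-\xi|$ for all $x\in I$, then $f\in L^\infty(I)$ and $|\tau_r^f-f(\xi)|\le\frac12c\,\lambda(I)$ for every $r>1$.
   Context: $\lambda$ is Lebesgue measure. For $h\in L^r(I)$ with $r>1$, $\tau_r^h$ denotes the unique real number minimizing $t\mapsto\|h-t\|_{L^r(I)}$. *)

(* Defs.v *)
(* Everything is relative to a bounded interval I = [lo, hi]. *)
From Stdlib Require Import Reals Lra ClassicalEpsilon.
Open Scope R_scope.

Definition Icc (lo hi : R) : R -> Prop := fun x => lo <= x <= hi.

Definition subset (A B : R -> Prop) : Prop := forall x, A x -> B x.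

Definition is_inf (E : R -> Prop) (m : R) : Prop :=
  (forall s, E s -> m <= s) /\ (forall m', (forall s, E s -> m' <= s) -> m' <= m).

Definition cover_length (A : R -> Prop) (s : R) : Prop :=
  exists a b : nat -> R,
    (forall n, a n <= b n) /\
    (forall x, A x -> exists n, a n < x < b n) /\
    Un_cv (fun N => sum_f_R0 (fun n => b n - a n) N) s.

(* Lebesgue outer measure (meaningful for bounded sets, the only use here) *)
Definition outer (A : R -> Prop) : R :=
  epsilon (inhabits 0) (fun m => is_inf (cover_length A) m).

Definition measurable_in (I E : R -> Prop) : Prop :=
  subset E I /\
  forall A, subset A I ->
    outer A = outer (fun x => A x /\ E x) + outer (fun x => A x /\ ~ E x).

Definition measurable_fun (I : R -> Prop) (f : R -> R) : Prop :=
  forall s, measurable_in I (fun x => I x /\ s < f x).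

Definition simple_below (I : R -> Prop) (g : R -> R) (v : R) : Prop :=
  exists (n : nat) (c : nat -> R) (E : nat -> R -> Prop),
    (forall i, (i < n)%nat ->
       0 <= c i /\ measurable_in I (E i) /\ (forall x, E i x -> c i <= g x)) /\
    (forall i j x, (i < j < n)%nat -> E i x -> E j x -> False) /\
    v = sum_f_R0 (fun i => c i * outer (E i)) (pred n) /\ (0 < n)%nat.

Definition integral (I : R -> Prop) (g : R -> R) : R :=
  epsilon (inhabits 0) (fun L => is_lub (simple_below I g) L).

(* |y|^p for real p > 0, with 0^p = 0 *)
Definition abs_pow (y p : R) : R :=
  if Req_EM_T y 0 then 0 else Rpower (Rabs y) p.

Definition Lr_norm (r : R) (I : R -> Prop) (h : R -> R) : R :=
  abs_pow (integral I (fun x => abs_pow (h x) r)) (/ r).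

(* t minimizes  s |-> || h - s ||_{L^r(I)}  ; tau_r^h is the (unique) such t *)
Definition is_tau (r : R) (I : R -> Prop) (h : R -> R) (t : R) : Prop :=
  forall s, Lr_norm r I (fun x => h x - t) <= Lr_norm r I (fun x => h x - s).

Definition in_Linfty (I : R -> Prop) (h : R -> R) : Prop :=
  measurable_fun I h /\
  exists M, outer (fun x => I x /\ M < Rabs (h x)) = 0.

(* Main.v *)
Require Import Defs.
From Stdlib Require Import Reals Lra Lia List FunctionalExtensionality PropExtensionality ClassicalEpsilon Classical.
Open Scope R_scope.

Lemma cover_length_nonneg A s : cover_length A s -> 0 <= s.
Proof.
  intros [a [b [Hab [_ Hcv]]]].
  assert (Hg : Un_growing (fun N => sum_f_R0 (fun n => b n - a n) N)).
  { intro n; simpl. specialize (Hab (S n)); lra. }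
  pose proof (growing_ineq _ _ Hg Hcv 0%nat) as H; simpl in H.
  specialize (Hab 0%nat); lra.
Qed.

Lemma cover_length_ge A s a b : (forall n, a n <= b n) -> (forall x, A x -> exists n, a n < x < b n) ->
  Un_cv (fun N => sum_f_R0 (fun n => b n - a n) N) s -> forall N, sum_f_R0 (fun n => b n - a n) N <= s.
Proof.
  intros Hab _ Hcv N.
  assert (Hg : Un_growing (fun N => sum_f_R0 (fun n => b n - a n) N)).
  { intro n; simpl. specialize (Hab (S n)); lra. }
  exact (growing_ineq _ _ Hg Hcv N).
Qed.

Lemma cover_bounded A lo hi : lo <= hi -> (forall x, A x -> lo <= x <= hi) -> cover_length A (hi - lo + 2).
Proof.
  intros Hlh HA.
  exists (fun n => match n with O => lo - 1 | _ => 0 end).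
  exists (fun n => match n with O => hi + 1 | _ => 0 end).
  split; [|split].
  - intros [|n]; lra.
  - intros x Hx; exists O; specialize (HA x Hx); lra.
  - intros e He; exists O; intros n _.
    assert (sum_f_R0 (fun n0 : nat => match n0 with
               | 0%nat => hi + 1 | S _ => 0 end - match n0 with
               | 0%nat => lo - 1 | S _ => 0 end) n = hi - lo + 2).
    { induction n; simpl; [lra|]. rewrite IHn; lra. }
    unfold R_dist; rewrite H, Rminus_diag, Rabs_R0; lra.
Qed.

Lemma outer_spec A : (exists s, cover_length A s) -> is_inf (cover_length A) (outer A).
Proof.
  intros Hex.
  assert (Hinf : exists m, is_inf (cover_length A) m).
  { set (E := fun y => cover_length A (- y)).
    assert (Hb : bound E).
    { exists 0; intros y Hy; apply cover_length_nonneg in Hy; lra. }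
    assert (Hne : exists y, E y).
    { destruct Hex as [s Hs]; exists (- s); unfold E; rewrite Ropp_involutive; auto. }
    destruct (completeness E Hb Hne) as [m [Hm1 Hm2]].
    exists (- m); split.
    - intros s Hs. assert (E (- s)) by (unfold E; rewrite Ropp_involutive; auto).
      specialize (Hm1 _ H); lra.
    - intros m' Hm'. assert (is_upper_bound E (- m')).
      { intros y Hy; specialize (Hm' _ Hy); lra. }
      specialize (Hm2 _ H); lra. }
  unfold outer.
  apply (epsilon_spec (inhabits 0) (fun m => is_inf (cover_length A) m) Hinf).
Qed.

Lemma outer_nonneg A : (exists s, cover_length A s) -> 0 <= outer A.
Proof.
  intros Hex; destruct (outer_spec A Hex) as [_ H2]; apply H2.
  intros s Hs; exact (cover_length_nonneg _ _ Hs).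
Qed.

Lemma outer_le_cover A s : cover_length A s -> outer A <= s.
Proof.
  intros Hs; destruct (outer_spec A (ex_intro _ s Hs)) as [H1 _]; auto.
Qed.

Lemma outer_approx A e : (exists s, cover_length A s) -> 0 < e ->
  exists s, cover_length A s /\ s < outer A + e.
Proof.
  intros Hex He. destruct (outer_spec A Hex) as [H1 H2].
  apply NNPP; intro Hn.
  assert (outer A + e <= outer A); [|lra].
  apply H2; intros s Hs. apply Rnot_lt_le; intro Hlt; apply Hn; eauto.
Qed.

Lemma outer_ext A B : (forall x, A x <-> B x) -> outer A = outer B.
Proof.
  intros H. assert (A = B) as ->; [|reflexivity].
  apply functional_extensionality; intro x; apply propositional_extensionality; auto.
Qed.

Lemma outer_mono A B : (forall x, A x -> B x) -> (exists s, cover_length B s) -> outer A <= outer B.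
Proof.
  intros HAB Hex.
  assert (HexA : exists s, cover_length A s).
  { destruct Hex as [s [a [b [H1 [H2 H3]]]]]; exists s, a, b; repeat split; auto. }
  destruct (outer_spec B Hex) as [_ H2]. apply H2.
  intros s [a [b [Ha [Hb Hc]]]]. apply outer_le_cover. exists a, b; repeat split; auto.
Qed.

Lemma outer_empty A : (forall x, ~ A x) -> outer A = 0.
Proof.
  intros HA.
  assert (H0 : cover_length A 0).
  { exists (fun _ => 0), (fun _ => 0); split; [intros; lra|split].
    - intros x Hx; exfalso; exact (HA x Hx).
    - intros e He; exists O; intros n _.
      assert (sum_f_R0 (fun _ : nat => 0 - 0) n = 0).
      { induction n; simpl; [lra|]. rewrite IHn; lra. }
      unfold R_dist; rewrite H, Rminus_diag, Rabs_R0; lra. }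
  pose proof (outer_le_cover _ _ H0). pose proof (outer_nonneg A (ex_intro _ 0 H0)). lra.
Qed.

Definition refl (c : R) (A : R -> Prop) : R -> Prop := fun x => A (2 * c - x).

Lemma cover_length_refl c A s : cover_length A s -> cover_length (refl c A) s.
Proof.
  intros [a [b [H1 [H2 H3]]]].
  exists (fun n => 2 * c - b n), (fun n => 2 * c - a n); split; [|split].
  - intro n; specialize (H1 n); lra.
  - intros x Hx; destruct (H2 _ Hx) as [n Hn]; exists n; lra.
  - assert (forall N, sum_f_R0 (fun n => (2 * c - a n) - (2 * c - b n)) N = sum_f_R0 (fun n => b n - a n) N).
    { intro N; apply sum_eq; intros; lra. }
    intros e He; destruct (H3 e He) as [N HN]; exists N; intros n Hn; rewrite H; auto.
Qed.

Lemma refl_refl c A x : refl c (refl c A) x <-> A x.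
Proof. unfold refl; replace (2 * c - (2 * c - x)) with x by ring; tauto. Qed.

Lemma outer_refl c A : outer (refl c A) = outer A.
Proof.
  unfold outer. assert (cover_length (refl c A) = cover_length A) as ->; [|reflexivity].
  apply functional_extensionality; intro s; apply propositional_extensionality; split.
  - intro H; apply cover_length_refl with (c := c) in H.
    assert (refl c (refl c A) = A) as E.
    { apply functional_extensionality; intro x; apply propositional_extensionality; apply refl_refl. }
    rewrite E in H; exact H.
  - apply cover_length_refl.
Qed.

Fixpoint sm (n : nat) (g : nat -> R) : R :=
  match n with O => 0 | S n' => sm n' g + g n' end.

Lemma sm_ext n g h : (forall i, (i < n)%nat -> g i = h i) -> sm n g = sm n h.
Proof. induction n; simpl; intros H; auto. rewrite IHn, H; auto. Qed.

Lemma sm_le n g h : (forall i, (i < n)%nat -> g i <= h i) -> sm n g <= sm n h.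
Proof. induction n; simpl; intros H; [lra|]. specialize (IHn (fun i Hi => H i ltac:(lia))). specialize (H n ltac:(lia)). lra. Qed.

Lemma sm_plus n g h : sm n (fun i => g i + h i) = sm n g + sm n h.
Proof. induction n; simpl; [lra|]. rewrite IHn; lra. Qed.

Lemma sm_scal n c g : sm n (fun i => c * g i) = c * sm n g.
Proof. induction n; simpl; [lra|]. rewrite IHn; lra. Qed.

Lemma sm_opp n g : sm n (fun i => - g i) = - sm n g.
Proof. induction n; simpl; [lra|]. rewrite IHn; lra. Qed.

Lemma sm_nonneg n g : (forall i, (i < n)%nat -> 0 <= g i) -> 0 <= sm n g.
Proof. intros H. replace 0 with (sm n (fun _ => 0)). apply sm_le; auto. induction n; simpl; auto. rewrite IHn; [lra|]. intros; apply H; lia. Qed.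

Lemma sm_swap n m g : sm n (fun i => sm m (fun j => g i j)) = sm m (fun j => sm n (fun i => g i j)).
Proof.
  induction n; simpl.
  - induction m; simpl; auto. rewrite <- IHm; lra.
  - rewrite IHn. rewrite <- sm_plus. reflexivity.
Qed.

Lemma sm_sum_f n g : (0 < n)%nat -> sum_f_R0 g (pred n) = sm n g.
Proof.
  destruct n as [|n]; [lia|]; intros _; simpl.
  induction n; simpl; [lra|]. rewrite IHn; reflexivity.
Qed.

Section Meas.
Variables lo hi : R.
Hypothesis Hlh : lo <= hi.
Let I := Icc lo hi.

Lemma sub_cover A : (forall x, A x -> I x) -> exists s, cover_length A s.
Proof. intros H; exists (hi - lo + 2); apply cover_bounded; auto. Qed.

Lemma outer_nonneg_I A : (forall x, A x -> I x) -> 0 <= outer A.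
Proof. intros; apply outer_nonneg, sub_cover; auto. Qed.

Lemma outer_mono_I A B : (forall x, A x -> B x) -> (forall x, B x -> I x) -> outer A <= outer B.
Proof. intros; apply outer_mono; auto; apply sub_cover; auto. Qed.

Lemma outer_I_bound A : (forall x, A x -> I x) -> outer A <= hi - lo + 2.
Proof. intros H; apply outer_le_cover, cover_bounded; auto. Qed.

Lemma meas_diff U V : measurable_in I U -> measurable_in I V -> (forall x, V x -> U x) ->
  measurable_in I (fun x => U x /\ ~ V x).
Proof.
  intros [HUs HU] [HVs HV] HVU; split.
  - intros x [Hx _]; auto.
  - intros A HA.
    rewrite (HU A HA).
    assert (HAU : subset (fun x => A x /\ U x) I) by (intros x [Hx _]; auto).
    rewrite (HV _ HAU).
    assert (HAC : subset (fun x => A x /\ ~ (U x /\ ~ V x)) I) by (intros x [Hx _]; auto).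
    rewrite (HU _ HAC).
    rewrite (outer_ext (fun x => (A x /\ U x) /\ V x) (fun x => (A x /\ ~ (U x /\ ~ V x)) /\ U x)).
    2:{ intro x; split; [intros [[? ?] ?]; repeat split; tauto|].
        intros [[Ha Hn] Hu]; repeat split; auto. apply NNPP; intro; apply Hn; auto. }
    rewrite (outer_ext (fun x => (A x /\ U x) /\ ~ V x) (fun x => A x /\ (U x /\ ~ V x))) by (intro; tauto).
    rewrite (outer_ext (fun x => A x /\ ~ U x) (fun x => (A x /\ ~ (U x /\ ~ V x)) /\ ~ U x)) by (intro; tauto).
    lra.
Qed.

Lemma meas_refl E : measurable_in I E -> measurable_in I (refl ((lo + hi) / 2) E).
Proof.
  intros [HEs HE]; split.
  - intros x Hx; specialize (HEs _ Hx); unfold I, Icc in *; lra.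
  - intros A HA.
    set (c := (lo + hi) / 2).
    assert (HRA : subset (refl c A) I) by (intros x Hx; specialize (HA _ Hx); unfold I, Icc, c in *; lra).
    rewrite <- (outer_refl c A), (HE _ HRA).
    rewrite <- (outer_refl c (fun x => refl c A x /\ E x)), <- (outer_refl c (fun x => refl c A x /\ ~ E x)).
    f_equal; apply outer_ext; intro x; unfold refl; replace (2 * c - (2 * c - x)) with x by ring; tauto.
Qed.

Lemma outer_add (n : nat) (D : nat -> R -> Prop) (A : R -> Prop) :
  (forall k, (k < n)%nat -> measurable_in I (D k)) ->
  (forall i j x, (i < j < n)%nat -> D i x -> D j x -> False) ->
  subset A I -> (forall x, A x -> exists k, (k < n)%nat /\ D k x) ->
  outer A = sm n (fun k => outer (fun x => A x /\ D k x)).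
Proof.
  revert A; induction n; intros A Hm Hd HA Hc; simpl.
  - apply outer_empty; intros x Hx; destruct (Hc x Hx) as [k [Hk _]]; lia.
  - destruct (Hm n ltac:(lia)) as [_ HDn].
    rewrite (HDn A HA).
    rewrite (IHn (fun x => A x /\ ~ D n x)).
    + rewrite Rplus_comm; f_equal. apply sm_ext; intros i Hi; apply outer_ext; intro x.
      split; [tauto|]. intros [Ha Hdi]; repeat split; auto. intro Hdn; exact (Hd i n x ltac:(lia) Hdi Hdn).
    + intros; apply Hm; lia.
    + intros i j x Hij; apply Hd; lia.
    + intros x [Hx _]; auto.
    + intros x [Hx Hn]; destruct (Hc x Hx) as [k [Hk Hdk]].
      exists k; split; auto. destruct (Nat.eq_dec k n); [subst; tauto|lia].
Qed.

End Meas.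

Lemma sm_minus n g h : sm n (fun i => g i - h i) = sm n g - sm n h.
Proof. induction n; simpl; [lra|]. rewrite IHn; lra. Qed.

Section HB.
Variables a b : nat -> R.
Hypothesis Hab : forall n, a n <= b n.
Let len n := b n - a n.
Definition lsum (l : list nat) : R := fold_right (fun n acc => b n - a n + acc) 0 l.

Lemma lsum_nonneg l : 0 <= lsum l.
Proof. induction l; simpl; [lra|]. specialize (Hab a0); lra. Qed.

Lemma lsum_remove l n0 : In n0 l -> b n0 - a n0 + lsum (remove Nat.eq_dec n0 l) <= lsum l.
Proof.
  induction l as [|x l IH]; simpl; [tauto|]. intros Hin.
  destruct (Nat.eq_dec n0 x) as [->|Hne].
  - destruct (in_dec Nat.eq_dec x l) as [Hi|Hi].
    + specialize (IH Hi). specialize (Hab x); lra.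
    + rewrite notin_remove; auto; lra.
  - simpl. destruct Hin as [->|Hi]; [congruence|]. specialize (IH Hi); lra.
Qed.

Lemma finite_cover_len : forall k (l : list nat), (length l <= k)%nat -> forall p q, p <= q ->
  (forall x, p <= x <= q -> exists n, In n l /\ a n < x < b n) -> q - p < lsum l.
Proof.
  induction k; intros l Hl p q Hpq Hc.
  - destruct l; simpl in Hl; [|lia]. destruct (Hc q) as [n [[] _]]; lra.
  - destruct (Hc q ltac:(lra)) as [n0 [Hin Hq]].
    pose proof (lsum_remove l n0 Hin) as Hr.
    pose proof (lsum_nonneg (remove Nat.eq_dec n0 l)).
    destruct (Rlt_le_dec (a n0) p).
    + lra.
    + assert (a n0 - p < lsum (remove Nat.eq_dec n0 l)); [|lra].
      apply IHk; auto.
      * pose proof (remove_length_lt Nat.eq_dec l n0 Hin); lia.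
      * intros x Hx. destruct (Hc x ltac:(lra)) as [n [Hn Hx']].
        exists n; split; auto. apply in_in_remove; auto. intros ->; lra.
Qed.

Lemma NoDup_remove' l n0 : NoDup l -> NoDup (remove Nat.eq_dec n0 l).
Proof.
  induction 1; simpl; [constructor|].
  destruct (Nat.eq_dec n0 x); auto. constructor; auto.
  intro Hi; apply in_remove in Hi; tauto.
Qed.

Lemma lsum_remove_eq l n0 : NoDup l -> In n0 l -> lsum l = b n0 - a n0 + lsum (remove Nat.eq_dec n0 l).
Proof.
  induction 1; simpl; [tauto|]. intros Hin.
  destruct (Nat.eq_dec n0 x) as [->|Hne].
  - rewrite notin_remove; auto.
  - simpl. destruct Hin as [->|Hi]; [congruence|]. rewrite IHNoDup; auto; lra.
Qed.

Lemma lsum_le_sm : forall N l, NoDup l -> (forall n, In n l -> (n < N)%nat) -> lsum l <= sm N len.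
Proof.
  induction N; intros l Hnd Hl; simpl.
  - destruct l; simpl; [lra|]. specialize (Hl n (or_introl eq_refl)); lia.
  - assert (Hrem : lsum (remove Nat.eq_dec N l) <= sm N len).
    { apply IHN. apply NoDup_remove'; auto.
      intros n Hn; apply in_remove in Hn; destruct Hn as [Hn Hne]; specialize (Hl _ Hn); lia. }
    destruct (in_dec Nat.eq_dec N l) as [Hi|Hi].
    + rewrite (lsum_remove_eq l N Hnd Hi). unfold len in *. simpl. idtac. lra.
    + rewrite notin_remove in Hrem; auto. specialize (Hab N). unfold len in *; lra.
Qed.
End HB.

Lemma list_R_nat (l : list R) : (forall y, In y l -> exists n, y = INR n) ->
  exists L : list nat, forall n, In (INR n) l -> In n L.
Proof.
  induction l as [|y l IH]; intros H.
  - exists nil; simpl; auto.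
  - destruct IH as [L HL]; [intros; apply H; simpl; auto|].
    destruct (H y (or_introl eq_refl)) as [m ->].
    exists (m :: L); intros n [Hn|Hn]; simpl; auto.
    left; apply INR_eq; auto.
Qed.

Lemma list_bound (L : list nat) : exists N, forall n, In n L -> (n < N)%nat.
Proof.
  induction L as [|x L [N HN]]; [exists O; simpl; tauto|].
  exists (S (Nat.max x N)); intros n [->|Hn]; [lia|]. specialize (HN _ Hn); lia.
Qed.

Lemma cover_interval_ge A p q s : p <= q -> (forall x, p <= x <= q -> A x) -> cover_length A s -> q - p <= s.
Proof.
  intros Hpq HA [a [b [Hab [Hc Hcv]]]].
  set (fam := mkfamily (fun i => exists n, i = INR n)
                (fun i x => exists n, i = INR n /\ a n < x < b n)
                (fun i H => match H with ex_intro _ x (ex_intro _ n (conj E _)) => ex_intro _ n E end)).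
  assert (Hop : covering_open_set (fun c => p <= c <= q) fam).
  { split.
    - intros x Hx. destruct (Hc x (HA x Hx)) as [n Hn]. exists (INR n); simpl; eauto.
    - intros i x [n [-> Hn]].
      assert (Hpos : 0 < Rmin (x - a n) (b n - x)) by (apply Rmin_pos; lra).
      exists (mkposreal _ Hpos); intros y Hy; unfold disc in Hy; simpl in Hy.
      exists n; split; auto.
      pose proof (Rmin_l (x - a n) (b n - x)); pose proof (Rmin_r (x - a n) (b n - x)).
      unfold Rabs in Hy; destruct (Rcase_abs (y - x)); lra. }
  destruct (compact_P3 p q fam Hop) as [D [Hcov [l Hl]]].
  assert (Hl' : forall y, In y l -> exists n, y = INR n).
  { intros y Hy; apply Hl in Hy; destruct Hy as [[n Hn] _]; eauto. }
  destruct (list_R_nat l Hl') as [L HL].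
  destruct (list_bound (nodup Nat.eq_dec L)) as [N HN].
  assert (Hlt : q - p < lsum a b (nodup Nat.eq_dec L)).
  { apply (finite_cover_len a b Hab (length (nodup Nat.eq_dec L))); auto.
    intros x Hx. destruct (Hcov x Hx) as [y [[n [-> Hn]] HD]].
    exists n; split; auto. apply nodup_In. apply HL. apply Hl. split; auto. exists n; auto. }
  pose proof (lsum_le_sm a b Hab N _ (NoDup_nodup _ _) HN).
  destruct N as [|N].
  - simpl in H. lra.
  - rewrite <- sm_sum_f in H by lia. simpl in H.
    pose proof (cover_length_ge A s a b Hab Hc Hcv N). lra.
Qed.

Lemma outer_interval_ge A p q : p <= q -> (forall x, p <= x <= q -> A x) -> (exists s, cover_length A s) -> q - p <= outer A.
Proof.
  intros Hpq HA Hex. destruct (outer_spec A Hex) as [_ H2]. apply H2.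
  intros s Hs; eapply cover_interval_ge; eauto.
Qed.

Section Phi.
Variable r : R.
Hypothesis Hr : 1 < r.
Let phi y := abs_pow y r.

Lemma phi_abs y : abs_pow (Rabs y) r = abs_pow y r.
Proof.
  unfold abs_pow. rewrite Rabs_Rabsolu.
  destruct (Req_EM_T (Rabs y) 0), (Req_EM_T y 0); auto.
  - exfalso; apply n; destruct (Rcase_abs y); unfold Rabs in e; destruct (Rcase_abs y); lra.
  - subst; rewrite Rabs_R0 in n; lra.
Qed.

Lemma phi_opp y : abs_pow (- y) r = abs_pow y r.
Proof. rewrite <- phi_abs, Rabs_Ropp, phi_abs; auto. Qed.

Lemma phi_nonneg y : 0 <= abs_pow y r.
Proof. unfold abs_pow; destruct (Req_EM_T y 0); [lra|]. unfold Rpower; left; apply exp_pos. Qed.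

Lemma phi_pos y : 0 < y -> abs_pow y r = Rpower y r.
Proof. intros H; unfold abs_pow; destruct (Req_EM_T y 0); [lra|]. rewrite Rabs_pos_eq; lra. Qed.

Lemma phi_zero : abs_pow 0 r = 0.
Proof. unfold abs_pow; destruct (Req_EM_T 0 0); lra. Qed.

Lemma phi_mono x y : 0 <= x <= y -> abs_pow x r <= abs_pow y r.
Proof.
  intros [H0 H1]. destruct (Req_dec x 0) as [->|Hx].
  - rewrite phi_zero; apply phi_nonneg.
  - rewrite !phi_pos by lra. apply Rle_Rpower_l; lra.
Qed.

Lemma pow_le_self l : 0 < l <= 1 -> Rpower l r <= l.
Proof.
  intros Hl. unfold Rpower. rewrite <- (exp_ln l) at 2 by lra.
  assert (ln l <= 0).
  { destruct (Req_dec l 1) as [->|]; [rewrite ln_1; lra|]. left; rewrite <- ln_1; apply ln_increasing; lra. }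
  destruct (Rle_lt_or_eq_dec _ _ H) as [Hlt|Heq].
  - left; apply exp_increasing; nra.
  - rewrite Heq; rewrite Rmult_0_r; lra.
Qed.

Lemma div_le_one a b : a <= b -> 0 < b -> a / b <= 1.
Proof. intros; unfold Rdiv; apply Rmult_le_reg_r with b; [lra|]. rewrite Rmult_assoc, Rinv_l; lra. Qed.

Lemma phi_superadd x y : 0 <= x -> 0 <= y -> abs_pow x r + abs_pow y r <= abs_pow (x + y) r.
Proof.
  intros Hx Hy.
  destruct (Req_dec x 0) as [->|Hx0]; [rewrite phi_zero, !Rplus_0_l; lra|].
  destruct (Req_dec y 0) as [->|Hy0]; [rewrite phi_zero, !Rplus_0_r; lra|].
  rewrite !phi_pos by lra.
  assert (Es : forall z, 0 < z -> Rpower z r = Rpower (z / (x + y)) r * Rpower (x + y) r).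
  { intros z Hz. rewrite Rpower_mult_distr. f_equal; field; lra.
    apply Rdiv_lt_0_compat; lra. lra. }
  rewrite (Es x), (Es y) by lra.
  pose proof (pow_le_self (x / (x + y))). pose proof (pow_le_self (y / (x + y))).
  assert (0 < x / (x + y) <= 1). { split. apply Rdiv_lt_0_compat; lra. apply div_le_one; lra. }
  assert (0 < y / (x + y) <= 1). { split. apply Rdiv_lt_0_compat; lra. apply div_le_one; lra. }
  assert (0 < Rpower (x + y) r) by (unfold Rpower; apply exp_pos).
  assert (x / (x + y) + y / (x + y) = 1) by (field; lra).
  nra.
Qed.

Lemma deriv_shift h z : 0 < z + h ->
  derivable_pt_lim (fun z => Rpower (z + h) r) z (r * Rpower (z + h) (r - 1)).
Proof.
  intros Hz.
  replace (r * Rpower (z + h) (r - 1)) with (r * Rpower (z + h) (r - 1) * 1) by ring.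
  apply (derivable_pt_lim_comp (fun z => z + h) (fun x => Rpower x r)).
  - replace 1 with (1 + 0) by ring. apply derivable_pt_lim_plus; [apply derivable_pt_lim_id|apply derivable_pt_lim_const].
  - apply derivable_pt_lim_power; auto.
Qed.

Lemma phi_incr y x h : 0 <= y <= x -> 0 <= h ->
  abs_pow (y + h) r - abs_pow y r <= abs_pow (x + h) r - abs_pow x r.
Proof.
  intros [Hy Hyx] Hh.
  destruct (Req_dec y 0) as [->|Hy0].
  { rewrite Rplus_0_l, phi_zero. pose proof (phi_superadd x h); lra. }
  destruct (Req_dec h 0) as [->|Hh0]; [rewrite !Rplus_0_r; lra|].
  destruct (Req_dec y x) as [->|Hyx0]; [lra|].
  rewrite !phi_pos by lra.
  destruct (MVT_cor2 (fun z => Rpower (z + h) r - Rpower (z + 0) r)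
              (fun z => r * Rpower (z + h) (r - 1) - r * Rpower (z + 0) (r - 1)) y x) as [c [Hc1 Hc2]].
  - lra.
  - intros c Hc. apply derivable_pt_lim_minus; apply deriv_shift; lra.
  - rewrite !Rplus_0_r in Hc1.
    assert (Rpower c (r - 1) <= Rpower (c + h) (r - 1)) by (apply Rle_Rpower_l; lra).
    assert (0 <= (r * Rpower (c + h) (r - 1) - r * Rpower c (r - 1)) * (x - y)) by (apply Rmult_le_pos; nra). lra.
Qed.

Lemma phi_lip_pos y x K : 0 <= y <= x -> x <= K ->
  abs_pow x r - abs_pow y r <= r * Rpower K (r - 1) * (x - y).
Proof.
  intros [Hy Hyx] HK.
  destruct (Req_dec y x) as [->|Hne]; [rewrite Rminus_diag; nra|].
  assert (HKp : 0 <= Rpower K (r - 1)) by (unfold Rpower; left; apply exp_pos).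
  destruct (Req_dec y 0) as [->|Hy0].
  - rewrite phi_zero, phi_pos by lra.
    assert (E : Rpower x r = x * Rpower x (r - 1)).
    { rewrite <- (Rpower_1 x) at 2 by lra. rewrite <- Rpower_plus. f_equal; ring. }
    rewrite E.
    assert (Rpower x (r - 1) <= Rpower K (r - 1)) by (apply Rle_Rpower_l; lra).
    assert (0 <= Rpower x (r - 1)) by (unfold Rpower; left; apply exp_pos).
    assert (x * Rpower x (r - 1) <= x * Rpower K (r - 1)) by (apply Rmult_le_compat_l; lra).
    assert (x * Rpower K (r - 1) <= r * Rpower K (r - 1) * x).
    { assert (0 <= (r - 1) * (x * Rpower K (r - 1))) by (apply Rmult_le_pos; [lra|apply Rmult_le_pos; lra]).
      replace (r * Rpower K (r - 1) * x) with (x * Rpower K (r - 1) + (r - 1) * (x * Rpower K (r - 1))) by ring.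
      lra. }
    lra.
  - rewrite !phi_pos by lra.
    destruct (MVT_cor2 (fun z => Rpower (z + 0) r) (fun z => r * Rpower (z + 0) (r - 1)) y x) as [c [Hc1 Hc2]].
    + lra.
    + intros c Hc; apply deriv_shift; lra.
    + rewrite !Rplus_0_r in Hc1.
      assert (Rpower c (r - 1) <= Rpower K (r - 1)) by (apply Rle_Rpower_l; lra).
      rewrite Hc1. assert (0 <= Rpower c (r - 1)) by (unfold Rpower; left; apply exp_pos).
      apply Rmult_le_compat_r; [lra|]. apply Rmult_le_compat_l; lra.
Qed.

Lemma phi_lip u v K : Rabs u <= K -> Rabs v <= K ->
  Rabs (abs_pow u r - abs_pow v r) <= r * Rpower K (r - 1) * Rabs (u - v).
Proof.
  intros Hu Hv.
  rewrite <- (phi_abs u), <- (phi_abs v).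
  assert (Hd : Rabs (Rabs u - Rabs v) <= Rabs (u - v)) by apply Rabs_triang_inv2.
  assert (HKp : 0 <= r * Rpower K (r - 1)) by (unfold Rpower; pose proof (exp_pos ((r - 1) * ln K)); nra).
  destruct (Rle_dec (Rabs v) (Rabs u)).
  - pose proof (phi_lip_pos (Rabs v) (Rabs u) K ltac:(split; [apply Rabs_pos|auto]) Hu).
    pose proof (phi_mono (Rabs v) (Rabs u) ltac:(split; [apply Rabs_pos|auto])).
    rewrite Rabs_pos_eq by lra. rewrite Rabs_pos_eq in Hd by lra. nra.
  - pose proof (phi_lip_pos (Rabs u) (Rabs v) K ltac:(split; [apply Rabs_pos|lra]) Hv).
    pose proof (phi_mono (Rabs u) (Rabs v) ltac:(split; [apply Rabs_pos|lra])).
    rewrite Rabs_left1 by lra. rewrite Rabs_left1 in Hd by lra. nra.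
Qed.

Lemma phi_pair_aux u v s t : u <= v -> s <= t -> u + v <= 2 * s ->
  abs_pow (u - s) r + abs_pow (v - s) r <= abs_pow (u - t) r + abs_pow (v - t) r.
Proof.
  intros Huv Hst Hs.
  set (p := s - u). set (d := t - s). set (w := v - s).
  assert (Hp : 0 <= p) by (unfold p; lra). assert (Hd : 0 <= d) by (unfold d; lra).
  assert (Hw : w <= p) by (unfold w, p; lra).
  replace (u - s) with (- p) by (unfold p; ring). replace (u - t) with (- (p + d)) by (unfold p, d; ring).
  replace (v - s) with w by (unfold w; ring). replace (v - t) with (w - d) by (unfold w, d; ring).
  rewrite !phi_opp.
  assert (Hpd : abs_pow p r <= abs_pow (p + d) r) by (apply phi_mono; lra).
  destruct (Rle_dec w 0).
  - rewrite <- (phi_opp w), <- (phi_opp (w - d)).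
    assert (abs_pow (- w) r <= abs_pow (- (w - d)) r) by (apply phi_mono; lra). lra.
  - destruct (Rle_dec w d).
    + pose proof (phi_superadd p d Hp Hd). pose proof (phi_mono w d ltac:(lra)).
      pose proof (phi_nonneg (w - d)). lra.
    + pose proof (phi_incr (w - d) p d ltac:(lra) Hd).
      replace (w - d + d) with w in H by ring. lra.
Qed.

Lemma phi_pair u v s t : s <= t -> u + v <= 2 * s ->
  abs_pow (u - s) r + abs_pow (v - s) r <= abs_pow (u - t) r + abs_pow (v - t) r.
Proof.
  intros Hst Hs. destruct (Rle_dec u v).
  - apply phi_pair_aux; auto.
  - pose proof (phi_pair_aux v u s t ltac:(lra) Hst ltac:(lra)). lra.
Qed.

Lemma phi_gap u s t : u <= s -> s <= t -> abs_pow (u - s) r + abs_pow (t - s) r <= abs_pow (u - t) r.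
Proof.
  intros H1 H2. rewrite <- (phi_opp (u - s)), <- (phi_opp (u - t)).
  replace (- (u - t)) with ((- (u - s)) + (t - s)) by ring.
  apply phi_superadd; lra.
Qed.

End Phi.

Lemma integral_bounds I g U v : (forall w, simple_below I g w -> w <= U) -> simple_below I g v ->
  v <= integral I g <= U.
Proof.
  intros HU Hv.
  assert (Hex : exists L, is_lub (simple_below I g) L).
  { destruct (completeness (simple_below I g)) as [L HL].
    - exists U; intros w Hw; auto.
    - exists v; auto.
    - exists L; auto. }
  pose proof (epsilon_spec (inhabits 0) (fun L => is_lub (simple_below I g) L) Hex) as [H1 H2].
  unfold integral; split; [apply H1; auto|apply H2; intros w Hw; auto].
Qed.

Section Simple.
Variables lo hi : R.
Hypothesis Hlh : lo <= hi.
Let I := Icc lo hi.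
Variable m : nat.
Variable C : nat -> R -> Prop.
Hypothesis Cmeas : forall j, (j < m)%nat -> measurable_in I (C j).
Hypothesis Cdisj : forall i j x, (i < j < m)%nat -> C i x -> C j x -> False.
Hypothesis Ccov : forall x, I x -> exists j, (j < m)%nat /\ C j x.

Lemma C_sub j : (j < m)%nat -> subset (C j) I.
Proof. intros Hj; exact (proj1 (Cmeas j Hj)). Qed.

Lemma simple_upper (g : R -> R) (M : nat -> R) :
  (forall j, (j < m)%nat -> 0 <= M j) ->
  (forall j x, (j < m)%nat -> C j x -> g x <= M j) ->
  forall w, simple_below I g w -> w <= sm m (fun j => M j * outer (C j)).
Proof.
  intros HM0 HM w [n [c [E [HE [HEd [-> Hn]]]]]].
  rewrite sm_sum_f by auto.
  assert (Esplit : forall i, (i < n)%nat -> outer (E i) = sm m (fun j => outer (fun x => E i x /\ C j x))).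
  { intros i Hi. destruct (HE i Hi) as [_ [[HEs _] _]].
    apply (outer_add lo hi); auto. }
  rewrite (sm_ext n _ (fun i => sm m (fun j => c i * outer (fun x => E i x /\ C j x)))).
  2:{ intros i Hi; rewrite Esplit by auto; rewrite sm_scal; auto. }
  rewrite sm_swap. apply sm_le; intros j Hj.
  apply Rle_trans with (sm n (fun i => M j * outer (fun x => E i x /\ C j x))).
  - apply sm_le; intros i Hi. destruct (HE i Hi) as [Hc0 [[HEs _] Hcg]].
    destruct (classic (exists x, E i x /\ C j x)) as [[x [Hx1 Hx2]]|Hne].
    + apply Rmult_le_compat_r.
      * apply (outer_nonneg_I lo hi Hlh); intros y [Hy _]; apply HEs; auto.
      * apply Rle_trans with (g x); auto.
    + rewrite outer_empty; [lra|]. intros x Hx; apply Hne; eauto.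
  - rewrite sm_scal. apply Rmult_le_compat_l; auto.
    set (Aj := fun x => C j x /\ exists i, (i < n)%nat /\ E i x).
    assert (Hadd : outer Aj = sm n (fun i => outer (fun x => Aj x /\ E i x))).
    { apply (outer_add lo hi).
      - intros i Hi; exact (proj1 (proj2 (HE i Hi))).
      - auto.
      - intros x [Hx _]; apply (C_sub j Hj); auto.
      - intros x [_ H]; auto. }
    rewrite (sm_ext n _ (fun i => outer (fun x => Aj x /\ E i x))).
    + rewrite <- Hadd. apply (outer_mono_I lo hi Hlh).
      * intros x [Hx _]; auto.
      * apply C_sub; auto.
    + intros i Hi; apply outer_ext; intro x; unfold Aj; split.
      * intros [H1 H2]; split; [split|]; eauto.
      * intros [[H1 _] H2]; auto.
Qed.

Lemma simple_lower (g : R -> R) (c : nat -> R) :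
  (0 < m)%nat ->
  (forall j, (j < m)%nat -> 0 <= c j) ->
  (forall j x, (j < m)%nat -> C j x -> c j <= g x) ->
  simple_below I g (sm m (fun j => c j * outer (C j))).
Proof.
  intros Hm Hc0 Hc. exists m, c, C. split; [|split; [|split]].
  - intros i Hi; split; [|split]; auto.
  - exact Cdisj.
  - rewrite sm_sum_f; auto.
  - auto.
Qed.

Lemma m_pos : lo <= hi -> (0 < m)%nat.
Proof. intros H. destruct (Ccov lo) as [j [Hj _]]; [unfold I, Icc; lra|lia]. Qed.

End Simple.

Section Core.
Variables lo hi : R.
Hypothesis Hlh : lo < hi.
Let I := Icc lo hi.
Let xi := (lo + hi) / 2.
Variable r : R.
Hypothesis Hr : 1 < r.
Variable g : R -> R.
Variables s tau B rho : R.
Hypothesis Hst : s < tau.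
Hypothesis Hpair : forall x, I x -> g x + g (2 * xi - x) <= 2 * s.
Hypothesis Hrho : 0 < rho.
Hypothesis Hrho2 : rho <= hi - lo.
Hypothesis Hnear : forall x, I x -> Rabs (x - xi) < rho -> g x <= s.
Hypothesis HB : forall x, I x -> Rabs (g x) <= B.
Variables (m : nat) (C : nat -> R -> Prop) (z : nat -> R) (d : R).
Hypothesis Cmeas : forall j, (j < m)%nat -> measurable_in I (C j).
Hypothesis Cdisj : forall i j x, (i < j < m)%nat -> C i x -> C j x -> False.
Hypothesis Ccov : forall x, I x -> exists j, (j < m)%nat /\ C j x.
Hypothesis Hz : forall j x, (j < m)%nat -> C j x -> z j <= g x <= z j + d.
Hypothesis Hd : 0 < d <= 1.
Let K := B + 1 + Rabs s + Rabs tau.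
Let Lam := r * Rpower K (r - 1).
Hypothesis Hsmall : 2 * Lam * d * (hi - lo + 2) < abs_pow (tau - s) r * rho.

Let Hlh' : lo <= hi. Proof. lra. Qed.

Lemma Lam_nonneg : 0 <= Lam.
Proof. unfold Lam, Rpower. pose proof (exp_pos ((r - 1) * ln K)). nra. Qed.

Lemma Csub j x : (j < m)%nat -> C j x -> I x.
Proof. intros Hj Hx; exact (proj1 (Cmeas j Hj) x Hx). Qed.

Lemma lip_cell t j x : Rabs t <= Rabs s + Rabs tau -> (j < m)%nat -> C j x ->
  Rabs (abs_pow (g x - t) r - abs_pow (z j - t) r) <= Lam * d.
Proof.
  intros Ht Hj Hx.
  pose proof (HB x (Csub j x Hj Hx)) as Hg. pose proof (Hz j x Hj Hx) as Hzj.
  pose proof Lam_nonneg.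
  eapply Rle_trans; [apply (phi_lip r Hr _ _ K)|].
  - eapply Rle_trans; [apply Rabs_triang|]. rewrite Rabs_Ropp. unfold K; lra.
  - eapply Rle_trans; [apply Rabs_triang|]. rewrite Rabs_Ropp.
    assert (Rabs (z j) <= B + 1).
    { unfold Rabs at 1; destruct (Rcase_abs (z j)); unfold Rabs in Hg; destruct (Rcase_abs (g x)); lra. }
    unfold K; lra.
  - fold Lam. apply Rmult_le_compat_l; auto.
    replace (g x - t - (z j - t)) with (g x - z j) by ring. rewrite Rabs_pos_eq; lra.
Qed.

Let RC k := refl xi (C k).

Lemma RCmeas k : (k < m)%nat -> measurable_in I (RC k).
Proof. intros Hk; apply (meas_refl lo hi); auto. Qed.

Lemma RCdisj i j x : (i < j < m)%nat -> RC i x -> RC j x -> False.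
Proof. unfold RC, refl; intros; eapply Cdisj; eauto. Qed.

Lemma I_refl x : I x -> I (2 * xi - x).
Proof. unfold I, Icc, xi; lra. Qed.

Lemma RCcov x : I x -> exists k, (k < m)%nat /\ RC k x.
Proof. intros Hx; apply Ccov, I_refl; auto. Qed.

Let om j k := outer (fun x => C j x /\ RC k x).
Let N := fun x => I x /\ Rabs (x - xi) < rho.
Let omN j k := outer (fun x => (N x /\ C j x) /\ RC k x).

Lemma P1 j : (j < m)%nat -> outer (C j) = sm m (fun k => om j k).
Proof.
  intros Hj. apply (outer_add lo hi).
  - apply RCmeas.
  - apply RCdisj.
  - intros x Hx; eapply Csub; eauto.
  - intros x Hx; apply RCcov; eapply Csub; eauto.
Qed.

Lemma P2 j k : om j k = om k j.
Proof.
  unfold om. rewrite <- (outer_refl xi (fun x => C k x /\ RC j x)).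
  apply outer_ext; intro x; unfold refl, RC, refl.
  replace (2 * xi - (2 * xi - x)) with x by ring. tauto.
Qed.

Lemma om_nonneg j k : (j < m)%nat -> 0 <= om j k.
Proof. intros Hj; apply (outer_nonneg_I lo hi Hlh'); intros x [Hx _]; eapply Csub; eauto. Qed.

Lemma sum_om : sm m (fun j => sm m (fun k => om j k)) = outer I.
Proof.
  rewrite (outer_add lo hi m C I); auto.
  - apply sm_ext; intros j Hj. rewrite <- P1 by auto. apply outer_ext; intro x; split.
    + intros Hx; split; auto; eapply Csub; eauto.
    + tauto.
  - intros x Hx; exact Hx.
Qed.

Lemma N_sub x : N x -> I x.
Proof. intros [H _]; auto. Qed.

Lemma sum_omN : sm m (fun j => sm m (fun k => omN j k)) = outer N.
Proof.
  rewrite (outer_add lo hi m C N); auto.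
  - apply sm_ext; intros j Hj. unfold omN. symmetry. apply (outer_add lo hi).
    + apply RCmeas.
    + apply RCdisj.
    + intros x [Hx _]; apply N_sub; auto.
    + intros x [Hx _]; apply RCcov, N_sub; auto.
  - intros x Hx; apply N_sub; auto.
  - intros x Hx; apply Ccov, N_sub; auto.
Qed.

Lemma outer_N : rho <= outer N.
Proof.
  replace rho with ((xi + rho / 2) - (xi - rho / 2)) by field.
  apply outer_interval_ge; [lra| |].
  - intros x Hx; unfold N, I, Icc, xi in *; split; [lra|].
    unfold Rabs; destruct (Rcase_abs (x - (lo + hi) / 2)); lra.
  - apply (sub_cover lo hi Hlh'). apply N_sub.
Qed.

Let Delta j := abs_pow (z j - tau) r - abs_pow (z j - s) r - 2 * Lam * d.

Lemma term_bound j k : (j < m)%nat -> (k < m)%nat ->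
  omN j k * (2 * abs_pow (tau - s) r) - om j k * (4 * Lam * d) <= om j k * (Delta j + Delta k).
Proof.
  intros Hj Hk.
  set (gam := abs_pow (z j - tau) r + abs_pow (z k - tau) r - abs_pow (z j - s) r - abs_pow (z k - s) r).
  replace (om j k * (Delta j + Delta k)) with (om j k * gam - om j k * (4 * Lam * d)) by (unfold gam, Delta; ring).
  assert (Hphi : 0 <= abs_pow (tau - s) r) by apply phi_nonneg.
  pose proof (om_nonneg j k Hj) as Hom.
  destruct (classic (exists x, (N x /\ C j x) /\ RC k x)) as [[x [[HN Hcj] Hck]]|Hne].
  - assert (HI : I x) by (apply N_sub; auto).
    assert (Hgx : g x <= s) by (apply Hnear; [auto|apply HN]).
    assert (Hgy : g (2 * xi - x) <= s).
    { apply Hnear; [apply I_refl; auto|]. replace (2 * xi - x - xi) with (- (x - xi)) by ring.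
      rewrite Rabs_Ropp; apply HN. }
    pose proof (Hz j x Hj Hcj). pose proof (Hz k _ Hk Hck).
    pose proof (phi_gap r Hr (z j) s tau ltac:(lra) ltac:(lra)).
    pose proof (phi_gap r Hr (z k) s tau ltac:(lra) ltac:(lra)).
    assert (Hgam : 2 * abs_pow (tau - s) r <= gam) by (unfold gam; lra).
    assert (HomN : 0 <= omN j k) by (apply (outer_nonneg_I lo hi Hlh'); intros y [[Hy _] _]; apply N_sub; auto).
    assert (HomN2 : omN j k <= om j k).
    { apply (outer_mono_I lo hi Hlh'). intros y [[_ Hy1] Hy2]; split; auto. intros y [Hy _]; exact (Csub j y Hj Hy). }
    assert (omN j k * (2 * abs_pow (tau - s) r) <= om j k * gam); [|lra].
    apply Rle_trans with (om j k * (2 * abs_pow (tau - s) r)).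
    + apply Rmult_le_compat_r; lra.
    + apply Rmult_le_compat_l; lra.
  - assert (HomN : omN j k = 0) by (apply outer_empty; intros x Hx; apply Hne; eauto).
    rewrite HomN.
    destruct (classic (exists x, C j x /\ RC k x)) as [[x [Hcj Hck]]|Hne2].
    + pose proof (Hz j x Hj Hcj). pose proof (Hz k _ Hk Hck).
      pose proof (Hpair x (Csub j x Hj Hcj)).
      pose proof (phi_pair r Hr (z j) (z k) s tau ltac:(lra) ltac:(unfold RC, refl in *; lra)).
      assert (0 <= gam) by (unfold gam; lra).
      assert (0 <= om j k * gam) by (apply Rmult_le_pos; auto). lra.
    + assert (Hom0 : om j k = 0) by (apply outer_empty; intros x Hx; apply Hne2; eauto).
      rewrite Hom0; lra.
Qed.

Lemma S_pos : 0 < sm m (fun j => outer (C j) * Delta j).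
Proof.
  set (S := sm m (fun j => outer (C j) * Delta j)).
  assert (E1 : S = sm m (fun j => sm m (fun k => om j k * Delta j))).
  { unfold S; apply sm_ext; intros j Hj. rewrite P1 by auto.
    rewrite Rmult_comm, <- sm_scal. apply sm_ext; intros; ring. }
  assert (E2 : S = sm m (fun j => sm m (fun k => om j k * Delta k))).
  { rewrite E1. rewrite (sm_ext m _ (fun j => sm m (fun k => om k j * Delta j))).
    - rewrite sm_swap. reflexivity.
    - intros j Hj; apply sm_ext; intros k Hk; rewrite P2; reflexivity. }
  assert (E3 : 2 * S = sm m (fun j => sm m (fun k => om j k * (Delta j + Delta k)))).
  { replace (2 * S) with (S + S) by ring. rewrite E1 at 1. rewrite E2.
    rewrite <- sm_plus. apply sm_ext; intros j Hj. rewrite <- sm_plus. apply sm_ext; intros; ring. }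
  assert (Hle : sm m (fun j => sm m (fun k => omN j k * (2 * abs_pow (tau - s) r) - om j k * (4 * Lam * d)))
                <= 2 * S).
  { rewrite E3. apply sm_le; intros j Hj; apply sm_le; intros k Hk; apply term_bound; auto. }
  assert (Ee : sm m (fun j => sm m (fun k => omN j k * (2 * abs_pow (tau - s) r) - om j k * (4 * Lam * d)))
             = 2 * abs_pow (tau - s) r * outer N - 4 * Lam * d * outer I).
  { rewrite <- sum_omN, <- sum_om.
    rewrite <- 2!sm_scal, <- sm_minus. apply sm_ext; intros j Hj.
    rewrite <- 2!sm_scal, <- sm_minus. apply sm_ext; intros; ring. }
  rewrite Ee in Hle.
  pose proof outer_N. pose proof (outer_I_bound lo hi Hlh' I (fun x H => H)).
  pose proof (phi_nonneg r (tau - s)). pose proof Lam_nonneg.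
  assert (abs_pow (tau - s) r * rho <= abs_pow (tau - s) r * outer N) by (apply Rmult_le_compat_l; lra).
  assert (Lam * d * outer I <= Lam * d * (hi - lo + 2)) by (apply Rmult_le_compat_l; [apply Rmult_le_pos|]; lra).
  nra.
Qed.


Lemma m_pos' : (0 < m)%nat.
Proof. destruct (Ccov lo) as [j [Hj _]]; [unfold I, Icc; lra|lia]. Qed.

Theorem core : integral I (fun x => abs_pow (g x - s) r) < integral I (fun x => abs_pow (g x - tau) r).
Proof.
  pose proof Lam_nonneg as HL.
  assert (Hts : Rabs s <= Rabs s + Rabs tau) by (pose proof (Rabs_pos tau); lra).
  assert (Htt : Rabs tau <= Rabs s + Rabs tau) by (pose proof (Rabs_pos s); lra).
  set (Mj := fun j => abs_pow (z j - s) r + Lam * d).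
  set (mj := fun j => Rmax 0 (abs_pow (z j - tau) r - Lam * d)).
  set (Mj' := fun j => abs_pow (z j - tau) r + Lam * d).
  assert (HU : integral I (fun x => abs_pow (g x - s) r) <= sm m (fun j => Mj j * outer (C j))).
  { apply (integral_bounds _ _ _ (sm m (fun j => 0 * outer (C j)))).
    - apply (simple_upper lo hi Hlh' m C Cmeas Cdisj Ccov).
      + intros j Hj; unfold Mj; pose proof (phi_nonneg r (z j - s)); assert (0 <= Lam * d) by (apply Rmult_le_pos; lra). lra.
      + intros j x Hj Hx. pose proof (lip_cell s j x Hts Hj Hx). unfold Mj.
        unfold Rabs in H; destruct (Rcase_abs (abs_pow (g x - s) r - abs_pow (z j - s) r)); lra.
    - apply (simple_lower lo hi m C Cmeas Cdisj); [apply m_pos'|intros; lra|].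
      intros; apply phi_nonneg. }
  assert (HLo : sm m (fun j => mj j * outer (C j)) <= integral I (fun x => abs_pow (g x - tau) r)).
  { apply (integral_bounds _ _ (sm m (fun j => Mj' j * outer (C j)))).
    - apply (simple_upper lo hi Hlh' m C Cmeas Cdisj Ccov).
      + intros j Hj; unfold Mj'; pose proof (phi_nonneg r (z j - tau)).
        assert (0 <= Lam * d) by (apply Rmult_le_pos; lra). lra.
      + intros j x Hj Hx. pose proof (lip_cell tau j x Htt Hj Hx). unfold Mj'.
        unfold Rabs in H; destruct (Rcase_abs (abs_pow (g x - tau) r - abs_pow (z j - tau) r)); lra.
    - apply (simple_lower lo hi m C Cmeas Cdisj); [apply m_pos'|intros; apply Rmax_l|].
      intros j x Hj Hx. pose proof (lip_cell tau j x Htt Hj Hx). unfold mj.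
      apply Rmax_lub; [apply phi_nonneg|].
      unfold Rabs in H; destruct (Rcase_abs (abs_pow (g x - tau) r - abs_pow (z j - tau) r)); lra. }
  pose proof S_pos.
  assert (sm m (fun j => outer (C j) * Delta j) + sm m (fun j => Mj j * outer (C j)) <= sm m (fun j => mj j * outer (C j))).
  { rewrite <- sm_plus. apply sm_le; intros j Hj.
    assert (0 <= outer (C j)) by (apply (outer_nonneg_I lo hi Hlh'); intros x Hx; eapply Csub; eauto).
    assert (abs_pow (z j - tau) r - Lam * d <= mj j) by (unfold mj; apply Rmax_r).
    unfold Delta, Mj. nra. }
  lra.
Qed.

End Core.

Lemma cells lo hi f B0 d : lo <= hi -> measurable_fun (Icc lo hi) f ->
  (forall x, Icc lo hi x -> Rabs (f x) <= B0) -> 0 < d ->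
  exists m (C : nat -> R -> Prop) (al : nat -> R),
    (forall j, (j < m)%nat -> measurable_in (Icc lo hi) (C j)) /\
    (forall i j x, (i < j < m)%nat -> C i x -> C j x -> False) /\
    (forall x, Icc lo hi x -> exists j, (j < m)%nat /\ C j x) /\
    (forall j x, (j < m)%nat -> C j x -> al j < f x <= al j + d).
Proof.
  intros Hlh Hf HB Hd.
  set (al := fun j => - B0 - 1 + INR j * d).
  set (U := fun j x => Icc lo hi x /\ al j < f x).
  destruct (INR_unbounded ((2 * B0 + 2) / d)) as [m Hm].
  exists m, (fun j x => U j x /\ ~ U (S j) x), al.
  assert (Hal : forall j, al (S j) = al j + d) by (intro j; unfold al; rewrite S_INR; ring).
  assert (Halmono : forall i j, (i <= j)%nat -> al i <= al j).
  { intros i j Hij; unfold al. apply le_INR in Hij. apply Rplus_le_compat_l. apply Rmult_le_compat_r; lra. }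
  split; [|split; [|split]].
  - intros j Hj. apply (meas_diff lo hi); [apply Hf|apply Hf|].
    intros x [Hx Hlt]; split; auto. rewrite Hal in Hlt; lra.
  - intros i j x Hij [[Hx1 Hi1] Hi2] [[Hx2 Hj1] Hj2].
    apply Hi2; split; auto. pose proof (Halmono (S i) j ltac:(lia)); lra.
  - intros x Hx. pose proof (HB x Hx) as Hb.
    assert (Hfx : forall n, f x <= al (S n) -> exists j, (j <= n)%nat /\ al j < f x <= al (S j)).
    { induction n; intros Hn.
      - exists O; split; auto. unfold al in *; simpl in *. unfold Rabs in Hb; destruct (Rcase_abs (f x)); lra.
      - destruct (Rle_dec (f x) (al (S n))) as [Hle|Hgt].
        + destruct (IHn Hle) as [j [Hj Hj2]]; exists j; split; auto.
        + exists (S n); split; auto; lra. }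
    destruct m as [|m'].
    + exfalso. simpl in Hm. assert (0 <= (2 * B0 + 2) / d); [|lra].
      unfold Rdiv; apply Rmult_le_pos; [|left; apply Rinv_0_lt_compat; auto].
      pose proof (Rabs_pos (f x)); lra.
    + destruct (Hfx m') as [j [Hj [Hj1 Hj2]]].
      * unfold al. assert (INR (S m') * d > 2 * B0 + 2).
        { apply Rmult_lt_reg_r with (/ d); [apply Rinv_0_lt_compat; auto|].
          rewrite Rmult_assoc, Rinv_r by lra. rewrite Rmult_1_r. exact Hm. }
        unfold Rabs in Hb; destruct (Rcase_abs (f x)); lra.
      * exists j; split; [lia|]. split; [split; auto|]. intros [_ H]; lra.
  - intros j x Hj [[Hx H1] H2]. split; auto. rewrite <- Hal.
    apply Rnot_lt_le; intro H; apply H2; split; auto.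
Qed.

Lemma one_side lo hi r g t0 a' c B tau :
  lo < hi -> 1 < r -> 0 <= c ->
  (forall d, 0 < d -> exists m (C : nat -> R -> Prop) (z : nat -> R),
    (forall j, (j < m)%nat -> measurable_in (Icc lo hi) (C j)) /\
    (forall i j x, (i < j < m)%nat -> C i x -> C j x -> False) /\
    (forall x, Icc lo hi x -> exists j, (j < m)%nat /\ C j x) /\
    (forall j x, (j < m)%nat -> C j x -> z j <= g x <= z j + d)) ->
  (forall x, Icc lo hi x -> Rabs (g x - (t0 + a' * (x - (lo + hi) / 2))) <= c * Rabs (x - (lo + hi) / 2)) ->
  (forall x, Icc lo hi x -> Rabs (g x) <= B) ->
  (forall s, ~ (integral (Icc lo hi) (fun x => abs_pow (g x - s) r) <
                integral (Icc lo hi) (fun x => abs_pow (g x - tau) r))) ->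
  tau <= t0 + / 2 * c * (hi - lo).
Proof.
  intros Hlh Hr Hc Hcells Hg HB Htau.
  apply Rnot_lt_le; intro Hlt.
  set (xi := (lo + hi) / 2) in *.
  set (delta := / 2 * c * (hi - lo)) in *.
  set (mu := (tau - (t0 + delta)) / 2).
  assert (Hmu : 0 < mu) by (unfold mu; lra).
  set (s := t0 + delta + mu).
  assert (Hdelta : 0 <= delta) by (unfold delta; apply Rmult_le_pos; [apply Rmult_le_pos|]; lra).
  set (A := Rabs a' + c + 1).
  assert (HA : 0 < A) by (unfold A; pose proof (Rabs_pos a'); lra).
  set (rho := Rmin (hi - lo) (mu / A)).
  assert (Hrho : 0 < rho) by (unfold rho; apply Rmin_pos; [lra|apply Rdiv_lt_0_compat; auto]).
  assert (Hrho1 : rho <= hi - lo) by apply Rmin_l.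
  assert (Hrho2 : rho * A <= mu).
  { assert (rho <= mu / A) by apply Rmin_r.
    apply Rmult_le_compat_r with (r := A) in H; [|lra].
    unfold Rdiv in H; rewrite Rmult_assoc, Rinv_l in H; lra. }
  set (phi0 := abs_pow (tau - s) r).
  assert (Hphi0 : 0 < phi0).
  { unfold phi0; rewrite phi_pos by (unfold s, mu in *; lra). unfold Rpower; apply exp_pos. }
  set (Lam := r * Rpower (B + 1 + Rabs s + Rabs tau) (r - 1)).
  assert (HL : 0 <= Lam) by (unfold Lam, Rpower; pose proof (exp_pos ((r - 1) * ln (B + 1 + Rabs s + Rabs tau))); nra).
  set (X := Lam * (hi - lo + 2)).
  assert (HX : 0 <= X) by (unfold X; apply Rmult_le_pos; lra).
  set (d := Rmin 1 (phi0 * rho / (4 * X + 1))).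
  assert (Hd : 0 < d <= 1).
  { split; [|apply Rmin_l]. apply Rmin_pos; [lra|]. apply Rdiv_lt_0_compat; [apply Rmult_lt_0_compat|]; lra. }
  assert (Hd2 : d * (4 * X + 1) <= phi0 * rho).
  { assert (d <= phi0 * rho / (4 * X + 1)) by apply Rmin_r.
    apply Rmult_le_compat_r with (r := 4 * X + 1) in H; [|lra].
    unfold Rdiv in H; rewrite Rmult_assoc, Rinv_l in H; lra. }
  destruct (Hcells d (proj1 Hd)) as [m [C [z [HCm [HCd [HCc HCz]]]]]].
  assert (Hxi : forall x, Icc lo hi x -> Rabs (x - xi) <= (hi - lo) / 2).
  { intros x Hx; unfold Icc, xi in *; unfold Rabs; destruct (Rcase_abs (x - (lo + hi) / 2)); lra. }
  assert (Hup : forall x, Icc lo hi x -> g x <= t0 + a' * (x - xi) + c * Rabs (x - xi)).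
  { intros x Hx; pose proof (Hg x Hx) as H. unfold Rabs at 1 in H; destruct (Rcase_abs (g x - (t0 + a' * (x - xi)))); lra. }
  assert (Hpair : forall x, Icc lo hi x -> g x + g (2 * xi - x) <= 2 * s).
  { intros x Hx.
    assert (Hx' : Icc lo hi (2 * xi - x)) by (unfold Icc, xi in *; lra).
    pose proof (Hup x Hx). pose proof (Hup _ Hx').
    replace (2 * xi - x - xi) with (- (x - xi)) in H0 by ring. rewrite Rabs_Ropp in H0.
    pose proof (Hxi x Hx).
    assert (c * Rabs (x - xi) <= c * ((hi - lo) / 2)) by (apply Rmult_le_compat_l; auto).
    assert (delta = c * ((hi - lo) / 2)) by (unfold delta; field).
    unfold s. lra. }
  assert (Hnear : forall x, Icc lo hi x -> Rabs (x - xi) < rho -> g x <= s).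
  { intros x Hx Hnear.
    pose proof (Hup x Hx).
    assert (a' * (x - xi) <= Rabs a' * Rabs (x - xi)).
    { rewrite <- Rabs_mult. apply Rle_abs. }
    assert (Rabs a' * Rabs (x - xi) <= Rabs a' * rho) by (apply Rmult_le_compat_l; [apply Rabs_pos|lra]).
    assert (c * Rabs (x - xi) <= c * rho) by (apply Rmult_le_compat_l; lra).
    assert ((Rabs a' + c) * rho <= mu).
    { unfold A in Hrho2. nra. }
    unfold s. lra. }
  assert (Hsmall : 2 * Lam * d * (hi - lo + 2) < phi0 * rho).
  { fold X. replace (2 * Lam * d * (hi - lo + 2)) with (2 * X * d) by (unfold X; ring). nra. }
  apply (Htau s).
  exact (core lo hi Hlh r Hr g s tau B rho ltac:(unfold s, mu in *; lra) Hpair Hrho Hrho1 Hnear HB m C z d HCm HCd HCc HCz Hd Hsmall).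
Qed.

Lemma meas_I lo hi : measurable_in (Icc lo hi) (Icc lo hi).
Proof.
  split; [intros x H; auto|]. intros A HA.
  rewrite (outer_empty (fun x => A x /\ ~ Icc lo hi x)) by (intros x [H1 H2]; apply H2, HA; auto).
  rewrite Rplus_0_r. apply outer_ext; intro x; split; [intro H; split; auto; apply HA; auto|tauto].
Qed.

Lemma meas_empty lo hi : measurable_in (Icc lo hi) (fun _ => False).
Proof.
  split; [intros x []|]. intros A HA.
  rewrite (outer_empty (fun x => A x /\ False)) by tauto.
  rewrite Rplus_0_l. apply outer_ext; tauto.
Qed.

Lemma integral_nonneg_bdd lo hi h M : lo <= hi -> 0 <= M -> (forall x, Icc lo hi x -> h x <= M) ->
  0 <= integral (Icc lo hi) h.
Proof.
  intros Hlh HM Hh.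
  assert (Hv : simple_below (Icc lo hi) h 0).
  { exists 1%nat, (fun _ => 0), (fun _ _ => False). split; [|split; [|split]].
    - intros i Hi; split; [lra|split; [apply meas_empty|]]. intros x [].
    - intros i j x _ [].
    - simpl. rewrite outer_empty by tauto. ring.
    - lia. }
  apply (integral_bounds _ _ (sm 1 (fun j => M * outer (Icc lo hi))) 0); auto.
  apply (simple_upper lo hi Hlh 1 (fun _ => Icc lo hi)).
  - intros; apply meas_I.
  - intros; lia.
  - intros x Hx; exists O; split; auto.
  - intros; auto.
  - intros j x _ Hx; auto.
Qed.

Lemma abs_pow_lt u v p : 0 < p -> 0 <= u < v -> abs_pow u p < abs_pow v p.
Proof.
  intros Hp [Hu Huv]. unfold abs_pow.
  destruct (Req_EM_T u 0), (Req_EM_T v 0); try lra.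
  - unfold Rpower; apply exp_pos.
  - rewrite !Rabs_pos_eq by lra. apply Rlt_Rpower_l; lra.
Qed.

Theorem proposition4 (lo hi : R) (f : R -> R) (a b c : R) :
  lo < hi ->
  measurable_fun (Icc lo hi) f ->
  (forall x, Icc lo hi x ->
     Rabs (f x - (a * x + b)) <= c * Rabs (x - (lo + hi) / 2)) ->
  in_Linfty (Icc lo hi) f /\
  (forall r tau, 1 < r -> is_tau r (Icc lo hi) f tau ->
     Rabs (tau - f ((lo + hi) / 2)) <= / 2 * c * (hi - lo)).
Proof.
  intros Hlh Hf Hbd.
  set (xi := (lo + hi) / 2) in *.
  assert (Hc : 0 <= c).
  { pose proof (Hbd lo ltac:(unfold Icc; lra)) as H. pose proof (Rabs_pos (f lo - (a * lo + b))).
    assert (Rabs (lo - xi) = (hi - lo) / 2) by (unfold xi; rewrite Rabs_left by lra; field).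
    rewrite H1 in H. nra. }
  assert (Hxi : f xi = a * xi + b).
  { pose proof (Hbd xi ltac:(unfold Icc, xi; lra)) as H. rewrite Rminus_diag, Rabs_R0, Rmult_0_r in H.
    pose proof (Rabs_pos (f xi - (a * xi + b))). assert (Rabs (f xi - (a * xi + b)) = 0) by lra.
    destruct (Req_dec (f xi - (a * xi + b)) 0) as [|Hn]; [lra|]. apply Rabs_no_R0 in Hn; lra. }
  set (B0 := Rabs a * (Rabs lo + Rabs hi) + Rabs b + c * (hi - lo)).
  assert (HB0 : forall x, Icc lo hi x -> Rabs (f x) <= B0).
  { intros x Hx. pose proof (Hbd x Hx).
    assert (Rabs (x - xi) <= hi - lo) by (unfold Icc, xi in *; unfold Rabs; destruct (Rcase_abs (x - (lo + hi) / 2)); lra).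
    assert (Rabs x <= Rabs lo + Rabs hi) by (unfold Icc in *; unfold Rabs; destruct (Rcase_abs x), (Rcase_abs lo), (Rcase_abs hi); lra).
    assert (Rabs (a * x + b) <= Rabs a * Rabs x + Rabs b) by (rewrite <- Rabs_mult; apply Rabs_triang).
    assert (Rabs a * Rabs x <= Rabs a * (Rabs lo + Rabs hi)) by (apply Rmult_le_compat_l; [apply Rabs_pos|auto]).
    assert (c * Rabs (x - xi) <= c * (hi - lo)) by (apply Rmult_le_compat_l; auto).
    replace (f x) with ((f x - (a * x + b)) + (a * x + b)) by ring.
    eapply Rle_trans; [apply Rabs_triang|]. unfold B0; lra. }
  split.
  - split; auto. exists B0. apply outer_empty. intros x [Hx H]. specialize (HB0 x Hx); lra.
  - intros r tau Hr Htau.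
    assert (Hint : forall t, 0 <= integral (Icc lo hi) (fun x => abs_pow (f x - t) r)).
    { intro t. apply (integral_nonneg_bdd lo hi _ (abs_pow (B0 + Rabs t) r)); [lra|apply phi_nonneg|].
      intros x Hx. rewrite <- phi_abs. apply (phi_mono r Hr); split; [apply Rabs_pos|].
      eapply Rle_trans; [apply Rabs_triang|]. rewrite Rabs_Ropp. specialize (HB0 x Hx); lra. }
    assert (Htau' : forall s, ~ (integral (Icc lo hi) (fun x => abs_pow (f x - s) r) <
                                integral (Icc lo hi) (fun x => abs_pow (f x - tau) r))).
    { intros s Hlt. specialize (Htau s). unfold Lr_norm in Htau.
      pose proof (abs_pow_lt _ _ (/ r) ltac:(apply Rinv_0_lt_compat; lra) (conj (Hint s) Hlt)). lra. }
    assert (Hcells : forall d, 0 < d -> exists m (C : nat -> R -> Prop) (al : nat -> R),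
      (forall j, (j < m)%nat -> measurable_in (Icc lo hi) (C j)) /\
      (forall i j x, (i < j < m)%nat -> C i x -> C j x -> False) /\
      (forall x, Icc lo hi x -> exists j, (j < m)%nat /\ C j x) /\
      (forall j x, (j < m)%nat -> C j x -> al j < f x <= al j + d)).
    { intros d Hd; apply cells with B0; auto; lra. }
    assert (Hup : tau <= f xi + / 2 * c * (hi - lo)).
    { apply (one_side lo hi r f (f xi) a c B0 tau Hlh Hr Hc); auto.
      - intros d Hd. destruct (Hcells d Hd) as [m [C [al [H1 [H2 [H3 H4]]]]]].
        exists m, C, al; split; [auto|split; [auto|split; [auto|]]].
        intros j x Hj Hx; specialize (H4 j x Hj Hx); lra.
      - intros x Hx. fold xi. replace (f xi + a * (x - xi)) with (a * x + b) by (rewrite Hxi; ring). auto. }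
    assert (Hlo : - tau <= - f xi + / 2 * c * (hi - lo)).
    { apply (one_side lo hi r (fun x => - f x) (- f xi) (- a) c B0 (- tau) Hlh Hr Hc); auto.
      - intros d Hd. destruct (Hcells d Hd) as [m [C [al [H1 [H2 [H3 H4]]]]]].
        exists m, C, (fun j => - al j - d); split; [auto|split; [auto|split; [auto|]]].
        intros j x Hj Hx; specialize (H4 j x Hj Hx); lra.
      - intros x Hx. fold xi. replace (- f x - (- f xi + - a * (x - xi))) with (- (f x - (a * x + b))) by (rewrite Hxi; ring).
        rewrite Rabs_Ropp; auto.
      - intros x Hx; rewrite Rabs_Ropp; auto.
      - intros s Hlt. apply (Htau' (- s)).
        assert (E1 : (fun x => abs_pow (- f x - s) r) = (fun x => abs_pow (f x - - s) r)).
        { apply functional_extensionality; intro x. rewrite <- phi_opp. f_equal; ring. }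
        assert (E2 : (fun x => abs_pow (- f x - - tau) r) = (fun x => abs_pow (f x - tau) r)).
        { apply functional_extensionality; intro x. rewrite <- phi_opp. f_equal; ring. }
        rewrite E1, E2 in Hlt. exact Hlt. }
    apply Rabs_le; lra.
Qed.
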